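(* Let $H$ be a string, $s\ge0$ an integer, and $j\in\mathsf{R}_{s,H}$. For any $j'\in[1\mathinner{.\,.}n]$, $\mathrm{LCE}(j,j')\ge3\tau-1$ holds if and only if $j'\in\mathsf{R}_{s,H}$. Moreover, if $j'\in\mathsf{R}_{s,H}$ then, letting $t=\mathrm{end}(j)-j$ and $t'=\mathrm{end}(j')-j'$, it holds $\mathrm{LCE}(j,j')\ge\min(t,t')$ and: (1) if $\mathrm{type}(j)\ne\mathrm{type}(j')$, then $T[j\mathinner{.\,.}n]\prec T[j'\mathinner{.\,.}n]$ iff $\mathrm{type}(j)<\mathrm{type}(j')$; (2) if $\mathrm{type}(j)=\mathrm{type}(j')=-1$ and $t\ne t'$, then $T[j\mathinner{.\,.}n]\prec T[j'\mathinner{.\,.}n]$ iff $t<t'$; (3) if $\mathrm{type}(j)=\mathrm{type}(j')=+1$ and $t\ne t'$, then $T[j\mathinner{.\,.}n]\prec T[j'\mathinner{.\,.}n]$ iff $t>t'$; (4) if $\mathrm{type}(j)\ne\mathrm{type}(j')$ or $t\ne t'$, then $\mathrm{LCE}(j,j')=\min(t,t')$.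
   Context: $T\in[0\mathinner{.\,.}\sigma)^n$ with $2\le\sigma<n^{1/7}$; $\tau=\lfloor\mu\log_\sigma n\rfloor$ for a fixed positive constant $\mu<1/6$ with $\tau\ge1$. $\prec$ is lexicographic order. $\mathrm{per}(S)$ is the shortest period of $S$. $\mathsf{R}=\{i\in[1\mathinner{.\,.}n-3\tau+2]:\mathrm{per}(T[i\mathinner{.\,.}i+3\tau-2])\le\tau/3\}$. $\mathrm{LCE}(i,i')$ is the length of the longest common prefix of $T[i\mathinner{.\,.}n]$ and $T[i'\mathinner{.\,.}n]$. For $j\in\mathsf{R}$: $\mathrm{end}(j)=\min\{j'\ge j:j'\notin\mathsf{R}\}+3\tau-2$; with $p=\mathrm{per}(T[j\mathinner{.\,.}j+3\tau-1))$, $\mathrm{Lroot}(j)=\min\{T[j+t\mathinner{.\,.}j+t+p):t\in[0\mathinner{.\,.}p)\}$ (lexicographic minimum). With $H=\mathrm{Lroot}(j)$, $T[j\mathinner{.\,.}\mathrm{end}(j))$ can be uniquely written as $H'H^kH''$ with $H'$ a proper suffix and $H''$ a proper prefix of $H$ (the L-decomposition); $\mathrm{Lhead}(j)=|H'|$. $\mathrm{type}(j)=+1$ if $\mathrm{end}(j)\le n$ and $T[\mathrm{end}(j)]\succ T[\mathrm{end}(j)-|H|]$, and $\mathrm{type}(j)=-1$ otherwise. $\mathsf{R}_{s,H}=\{j\in\mathsf{R}:\mathrm{Lroot}(j)=H,\ \mathrm{Lhead}(j)=s\}$. *)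

(* Defs.v *)
From mathcomp Require Import all_boot.
From Stdlib Require Import Reals ZArith.

Set Implicit Arguments.
Unset Strict Implicit.
Unset Printing Implicit Defensive.

(* Text T is a seq nat of length n; positions are 1-based: T[i] = nth 0 T (i-1). *)
Definition tch (T : seq nat) (i : nat) : nat := nth 0 T i.-1.

(* T[i .. k)  (1-based, right end exclusive) *)
Definition sub (T : seq nat) (i k : nat) : seq nat :=
  [seq tch T x | x <- iota i (k - i)].

Definition suff (T : seq nat) (i : nat) : seq nat := drop i.-1 T.

Fixpoint lexlt (s t : seq nat) : bool :=
  match s, t with
  | _, [::] => false
  | [::], _ :: _ => true
  | a :: s', b :: t' => (a < b) || ((a == b) && lexlt s' t')
  end.

Fixpoint lcp (s t : seq nat) : nat :=
  match s, t with
  | a :: s', b :: t' => if a == b then (lcp s' t').+1 else 0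
  | _, _ => 0
  end.

Definition LCE (T : seq nat) (i i' : nat) : nat := lcp (suff T i) (suff T i').

Definition is_period (S : seq nat) (p : nat) : bool :=
  (0 < p) && all (fun i => nth 0 S i == nth 0 S (i + p)) (iota 0 (size S - p)).

Definition per (S : seq nat) : nat := (find (is_period S) (iota 1 (size S))).+1.

(* i \in R  :  i in [1 .. n-3tau+2]  and  per(T[i .. i+3tau-2]) <= tau/3 *)
Definition inR (T : seq nat) (tau i : nat) : bool :=
  [&& 1 <= i, i + 3 * tau <= size T + 2 &
      3 * per (sub T i (i + 3 * tau - 1)) <= tau].

(* end(j) = min{ j' >= j : j' \notin R } + 3tau - 2 *)
Definition endp (T : seq nat) (tau j : nat) : nat :=
  j + find (fun d => ~~ inR T tau (j + d)) (iota 0 (size T).+2) + 3 * tau - 2.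

Definition lexmin (l : seq (seq nat)) : seq nat :=
  foldl (fun m x => if lexlt x m then x else m) (head [::] l) (behead l).

Definition Lroot (T : seq nat) (tau j : nat) : seq nat :=
  let p := per (sub T j (j + 3 * tau - 1)) in
  lexmin [seq sub T (j + t) (j + t + p) | t <- iota 0 p].

(* S = H' H^k H'' with H' the proper suffix of H of length s (s < |H|) and
   H'' a proper prefix of H *)
Definition Ldecomp_ok (S H : seq nat) (s : nat) : bool :=
  [exists k : 'I_(size S).+1, exists m : 'I_(size H),
     S == drop (size H - s) H ++ flatten (nseq k H) ++ take m H].

(* Lhead(j) = |H'| in the L-decomposition of T[j .. end(j)) *)
Definition Lhead (T : seq nat) (tau j : nat) : nat :=
  let H := Lroot T tau j in
  find (Ldecomp_ok (sub T j (endp T tau j)) H) (iota 0 (size H)).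

Definition typ (T : seq nat) (tau j : nat) : Z :=
  let e := endp T tau j in
  if (e <= size T) && (tch T (e - size (Lroot T tau j)) < tch T e)
  then 1%Z else (-1)%Z.

Definition inRsH (T : seq nat) (tau s : nat) (H : seq nat) (j : nat) : Prop :=
  inR T tau j /\ Lroot T tau j = H /\ Lhead T tau j = s.

(* Main.v *)
Require Import Defs.
From mathcomp Require Import all_boot.
From Stdlib Require Import Reals ZArith Lia.
From mathcomp Require Import zify.

Set Implicit Arguments.
Unset Strict Implicit.
Unset Printing Implicit Defensive.

Lemma size_sub T i k : size (sub T i k) = k - i.
Proof. by rewrite /sub size_map size_iota. Qed.

Lemma nth_sub T i k x : x < k - i -> nth 0 (sub T i k) x = tch T (i + x).
Proof. by move=> h; rewrite /sub (nth_map 0) ?size_iota // nth_iota. Qed.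

Lemma is_periodE S p : is_period S p <->
  (0 < p /\ forall i, i + p < size S -> nth 0 S i = nth 0 S (i + p)).
Proof.
rewrite /is_period; split.
- case/andP=> hp /allP h; split=> // i hi; apply/eqP/h; rewrite mem_iota; lia.
- case=> hp h; apply/andP; split=> //; apply/allP=> i; rewrite mem_iota => hi.
  apply/eqP/h; lia.
Qed.

Lemma per_period S : 0 < size S -> is_period S (per S).
Proof.
move=> hS; rewrite /per.
have hh: has (is_period S) (iota 1 (size S)).
  apply/hasP; exists (size S); first by rewrite mem_iota; lia.
  by apply/is_periodE; split=> // i; lia.
have hf : find (is_period S) (iota 1 (size S)) < size S.
  by rewrite -{2}(size_iota 1 (size S)) -has_find.
by have := nth_find 0 hh; rewrite nth_iota // add1n.
Qed.

Lemma per_min S q : is_period S q -> q <= size S -> per S <= q.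
Proof.
move=> hq hqs; have [q0 _] := (proj1 (is_periodE S q)) hq.
rewrite /per; case: (ltnP (find (is_period S) (iota 1 (size S))) q) => // h.
have := @before_find _ 0 (is_period S) (iota 1 (size S)) q.-1.
rewrite nth_iota; last by lia.
have -> : 1 + q.-1 = q by lia.
rewrite hq => H; have : true = false by apply: H; lia.
done.

Qed.

Lemma per_pos S : 0 < per S.
Proof. by []. Qed.

Definition pT T a b p := forall x, a <= x -> x + p < b -> tch T x = tch T (x + p).

Lemma period_sub T i l p : is_period (sub T i (i + l)) p -> pT T i (i+l) p.
Proof.
case/is_periodE=> hp h x hx hxp.
have := h (x - i); rewrite size_sub => /(_ ltac:(lia)).
rewrite !nth_sub; try lia.
have -> : i + (x - i) = x by lia.
by have -> : i + (x - i + p) = x + p by lia.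
Qed.

Lemma sub_period T i l p : 0 < p -> pT T i (i+l) p -> is_period (sub T i (i + l)) p.
Proof.
move=> hp h; apply/is_periodE; split=> // x; rewrite size_sub => hx.
rewrite !nth_sub; try lia.
rewrite addnA; apply: h; lia.
Qed.

Lemma sub_eq T a b l : (forall i, i < l -> tch T (a+i) = tch T (b+i)) ->
  sub T a (a+l) = sub T b (b+l).
Proof.
move=> h; apply: (@eq_from_nth _ 0); rewrite !size_sub //; first lia.
move=> i hi; rewrite !nth_sub; try lia; apply: h; lia.
Qed.

Lemma pT_k T a b p : pT T a b p -> forall k x, a <= x -> x + k * p < b ->
  tch T x = tch T (x + k * p).
Proof.
move=> h; elim=> [|k IH] x hx hb; first by rewrite mul0n addn0.
rewrite h; try lia. rewrite (IH (x + p)); try lia.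
congr tch; lia.
Qed.

Lemma pT_mod T a b p x y : 0 < p -> pT T a b p -> a <= x -> a <= y -> x < b -> y < b ->
  x %% p = y %% p -> tch T x = tch T y.
Proof.
move=> hp h.
wlog hxy : x y / x <= y.
  move=> W hx hy hxb hyb e; case: (leqP x y) => hl; first by apply: W.
  symmetry; apply: W => //; lia.
move=> hx hy hxb hyb e.
have : p %| y - x by rewrite -eqn_mod_dvd // e.
move/divnK => hk.
have -> : y = x + (y - x) %/ p * p by rewrite hk; lia.
apply: (pT_k h) => //; rewrite hk; lia.
Qed.
Definition W T tau i := sub T i (i + 3 * tau - 1).

Lemma inR_facts T tau i : inR T tau i ->
  [/\ 1 <= i, i + 3*tau <= size T + 2, 0 < per (W T tau i), 3 * per (W T tau i) <= tau
   & pT T i (i + 3*tau - 1) (per (W T tau i))].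
Proof.
case/and3P=> h1 h2 h3; split=> //.
have ht : 1 <= tau by move: h3; have := per_pos (sub T i (i + 3 * tau - 1)); lia.
have E : i + 3*tau - 1 = i + (3*tau-1) by lia.
rewrite /W E; apply: period_sub; apply: per_period; rewrite size_sub.
lia.
Qed.

Lemma perW_min T tau i q : 0 < q -> q <= 3*tau - 1 -> pT T i (i+3*tau-1) q ->
  per (W T tau i) <= q.
Proof.
move=> hq hql hp.
have E : i + 3*tau - 1 = i + (3*tau-1) by lia.
rewrite /W E; apply: per_min; last by rewrite size_sub; lia.
by apply: sub_period => //; rewrite -E.
Qed.

Lemma perA T tau i : inR T tau i -> inR T tau i.+1 -> per (W T tau i.+1) = per (W T tau i).
Proof.
move=> /inR_facts [a1 a2 a3 a4 a5] /inR_facts [b1 b2 b3 b4 b5].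
set p := per (W T tau i) in a3 a4 a5 *.
set q := per (W T tau i.+1) in b3 b4 b5 *.
apply/eqP; rewrite eqn_leq; apply/andP; split.
- apply: perW_min => //; first lia.
  move=> x hx hxp.
  case: (ltnP (x + p) (i + 3*tau - 1)) => hc; first by apply: a5; lia.
  have ex : x = i + 3*tau - 1 - p by lia.
  rewrite ex.
  have -> : i + 3 * tau - 1 - p + p = i + 3*tau - 1 by lia.
  have e1 : tch T (i + 3*tau - 1 - q) = tch T (i + 3*tau - 1 - q + q) by apply: b5; lia.
  have e2 : tch T (i + 3*tau - 1 - q - p) = tch T (i + 3*tau - 1 - q - p + p) by apply: a5; lia.
  have e3 : tch T (i + 3*tau - 1 - q - p) = tch T (i + 3*tau - 1 - q - p + q) by apply: b5; lia.
  have f1 : i + 3*tau - 1 - q + q = i + 3*tau - 1 by lia.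
  have f2 : i + 3*tau - 1 - q - p + p = i + 3*tau - 1 - q by lia.
  have f3 : i + 3*tau - 1 - q - p + q = i + 3*tau - 1 - p by lia.
  rewrite f1 in e1; rewrite f2 in e2; rewrite f3 in e3.
  by rewrite -e3 e2 e1.
- apply: perW_min => //; first lia.
  move=> x hx hxp.
  case: (ltnP i x) => hc; first by apply: b5; lia.
  have ex : x = i by lia.
  rewrite ex.
  have e1 : tch T i = tch T (i + p) by apply: a5; lia.
  have e2 : tch T (i + p) = tch T (i + p + q) by apply: b5; lia.
  have e3 : tch T (i + q) = tch T (i + q + p) by apply: a5; lia.
  by rewrite e1 e2 e3; congr tch; lia.
Qed.

Lemma run_facts T tau j : inR T tau j -> exists d0,
  [/\ endp T tau j = j + d0 + 3*tau - 2, 0 < d0,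
      (forall d, d < d0 -> inR T tau (j+d)) & ~~ inR T tau (j + d0)].
Proof.
move=> hj; have [f1 f2 f3 f4 f5] := inR_facts hj.
set a := (fun d => ~~ inR T tau (j + d)).
set d0 := find a (iota 0 (size T).+2).
have hh : has a (iota 0 (size T).+2).
  apply/hasP; exists (size T).+1; first by rewrite mem_iota; lia.
  rewrite /a /inR; apply/negP => /and3P [_ h _]; lia.
have hd0 : d0 < (size T).+2 by move: hh; rewrite has_find size_iota.
exists d0; split.
- by [].
- case: (posnP d0) => // e; have := nth_find 0 hh; rewrite -/d0 e /= /a addn0 hj //.
- move=> d hd; have := @before_find _ 0 a _ d hd; rewrite nth_iota; last by lia.
  by rewrite /a add0n => /negbFE.
- by have := nth_find 0 hh; rewrite -/d0 nth_iota.
Qed.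

Lemma run_info T tau j : inR T tau j ->
  [/\ j + 3*tau - 1 <= endp T tau j, endp T tau j <= size T + 1,
      pT T j (endp T tau j) (per (W T tau j)) &
      (endp T tau j <= size T -> tch T (endp T tau j) <> tch T (endp T tau j - per (W T tau j)))].
Proof.
move=> hj; have [f1 f2 f3 f4 f5] := inR_facts hj.
have [d0 [he hd0 hin hout]] := run_facts hj.
have hper : forall d, d < d0 -> per (W T tau (j+d)) = per (W T tau j).
  elim=> [|d IH] hd; first by rewrite addn0.
  rewrite addnS perA ?IH //; first lia.
  by apply: hin; lia.
  by rewrite -addnS; apply: hin.
set p := per (W T tau j) in f3 f4 f5 hper *.
have hlast := hin (d0 - 1) ltac:(lia).
have [g1 g2 g3 g4 g5] := inR_facts hlast.
have hpT : pT T j (endp T tau j) p.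
  move=> x hx hxp.
  have [i [hi hi1 hi2]] : exists i, [/\ i < d0, j + i <= x & x + p < j + i + 3 * tau - 1].
    case: (ltnP (x - j) d0) => hc; first by exists (x - j); split; lia.
    exists (d0 - 1); split; lia.
  have [k1 k2 k3 k4 k5] := inR_facts (hin i hi).
  rewrite hper // in k5.
  by apply: k5.
split=> //; try lia.
move=> hen heq.
move: hout; rewrite /inR; apply/negP/negPn; apply/and3P; split; try lia.
have hle := @perW_min T tau (j + d0) p f3 ltac:(lia).
rewrite /W in hle; apply: (leq_trans _ f4); rewrite leq_mul2l; apply: hle.
move=> x hx hxp.
case: (ltnP (x + p) (endp T tau j)) => hc; first by apply: hpT; lia.
have ex : x = endp T tau j - p by lia.
rewrite ex; have -> : endp T tau j - p + p = endp T tau j by lia.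
by rewrite heq.
Qed.

Lemma lexmin_in l : l != [::] -> lexmin l \in l.
Proof.
case: l => // x l _; rewrite /lexmin /=.
elim: l x => [|y l IH] x /=; first by rewrite inE.
have := IH (if lexlt y x then y else x).
case: (lexlt y x); rewrite !inE => /orP [/eqP ->|->]; rewrite ?eqxx ?orbT //.
Qed.

Lemma Lroot_form T tau j : inR T tau j -> exists2 t0, t0 < per (W T tau j) &
  Lroot T tau j = sub T (j+t0) (j+t0+per (W T tau j)).
Proof.
move=> hj; have [f1 f2 f3 f4 f5] := inR_facts hj.
have : Lroot T tau j \in [seq sub T (j + t) (j + t + per (W T tau j)) | t <- iota 0 (per (W T tau j))].
  by apply: lexmin_in; rewrite -size_eq0 size_map size_iota -lt0n.
case/mapP=> t0; rewrite mem_iota => ht ->; exists t0 => //; lia.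
Qed.

Lemma size_Lroot T tau j : inR T tau j -> size (Lroot T tau j) = per (W T tau j).
Proof. by case/Lroot_form=> t0 _ ->; rewrite size_sub; lia. Qed.

Definition Q (S H : seq nat) (s : nat) :=
  forall i, i < size S -> nth 0 S i = nth 0 H ((i + size H - s) %% size H).

Lemma size_flat_nseq (H : seq nat) k : size (flatten (nseq k H)) = k * size H.
Proof. by elim: k => [|k IH] //=; rewrite size_cat IH mulSn. Qed.

Lemma nth_flat_nseq H k i : i < k * size H ->
  nth 0 (flatten (nseq k H)) i = nth 0 H (i %% size H).
Proof.
elim: k i => [|k IH] i hi; first by rewrite mul0n in hi.
rewrite /= nth_cat; case: (ltnP i (size H)) => h; first by rewrite modn_small.
rewrite IH; last by rewrite mulSn in hi; lia.
have e : i = (i - size H) + size H by lia.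
by rewrite {2}e modnDr.
Qed.

Lemma nth_dec H s k m i : 0 < size H -> s <= size H -> m <= size H ->
  i < s + k * size H + m ->
  nth 0 (drop (size H - s) H ++ flatten (nseq k H) ++ take m H) i
  = nth 0 H ((i + size H - s) %% size H).
Proof.
move=> hp hs hm hi.
rewrite nth_cat size_drop; case: (ltnP i (size H - (size H - s))) => h1.
  rewrite nth_drop modn_small; last by lia.
  congr nth; lia.
rewrite nth_cat size_flat_nseq; case: ltnP => h2.
  rewrite nth_flat_nseq //.
  have -> : i + size H - s = (i - (size H - (size H - s))) + size H by lia.
  by rewrite modnDr.
rewrite nth_take; last by lia.
have -> : i + size H - s = k.+1 * size H + (i - (size H - (size H - s)) - k * size H) by rewrite mulSn; lia.
rewrite modnMDl modn_small //; lia.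
Qed.

Lemma Ldecomp_Q S H s : 0 < size H -> s < size H -> s <= size S ->
  Ldecomp_ok S H s <-> Q S H s.
Proof.
move=> hp hs hS; split.
- case/existsP=> k /existsP [m /eqP ->] i.
  rewrite !size_cat size_drop size_flat_nseq size_takel; last by apply: ltnW.
  move=> hi; rewrite nth_dec //; [lia | apply: ltnW; done | lia].
- move=> hQ.
  have hk : (size S - s) %/ size H < (size S).+1.
    by rewrite ltnS; apply: (leq_trans (leq_div _ _)); apply: leq_subr.
  have hm : (size S - s) %% size H < size H by rewrite ltn_pmod.
  apply/existsP; exists (Ordinal hk); apply/existsP; exists (Ordinal hm) => /=.
  have hsz : size S = s + (size S - s) %/ size H * size H + (size S - s) %% size H.
    by rewrite -addnA -divn_eq; lia.
  apply/eqP; apply: (@eq_from_nth _ 0).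
    rewrite !size_cat size_drop size_flat_nseq size_takel; last by apply: ltnW.
    rewrite {1}hsz; lia.
  move=> i hi; rewrite hQ // nth_dec //; [lia | apply: ltnW; done | by rewrite -hsz].
Qed.

Lemma Q_period S H s : 0 < size H -> s <= size H ->
  (forall i, i + size H < size S -> nth 0 S i = nth 0 S (i + size H)) ->
  (forall i, i < size H -> i < size S -> nth 0 S i = nth 0 H ((i + size H - s) %% size H)) ->
  Q S H s.
Proof.
move=> hp hs hper h0; elim/ltn_ind=> i IH hi.
case: (ltnP i (size H)) => h; first by apply: h0.
have e : i = (i - size H) + size H by lia.
rewrite e -hper; last by lia.
rewrite IH; try lia.
have -> : i - size H + size H + size H - s = (i - size H + size H - s) + size H by lia.
by rewrite modnDr.
Qed.

Definition Sx T tau x := sub T x (endp T tau x).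

Lemma size_Sx T tau x : inR T tau x -> 3 * tau - 1 <= size (Sx T tau x).
Proof. move=> hx; have [h1 _ _ _] := run_info hx; rewrite /Sx size_sub; lia. Qed.

Lemma nth_Sx T tau x i : i < size (Sx T tau x) -> nth 0 (Sx T tau x) i = tch T (x + i).
Proof. by rewrite /Sx size_sub => h; rewrite nth_sub. Qed.

Lemma Sx_period T tau x : inR T tau x -> forall i, i + per (W T tau x) < size (Sx T tau x) ->
  nth 0 (Sx T tau x) i = nth 0 (Sx T tau x) (i + per (W T tau x)).
Proof.
move=> hx i hi; have [h1 h2 h3 h4] := run_info hx.
rewrite !nth_Sx; try lia. rewrite addnA; apply: h3; move: hi; rewrite /Sx size_sub; lia.
Qed.

Lemma Q_first T tau x s' : inR T tau x -> s' <= size (Lroot T tau x) ->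
  Q (Sx T tau x) (Lroot T tau x) s' <->
  (forall i, i < size (Lroot T tau x) -> tch T (x + i) =
      nth 0 (Lroot T tau x) ((i + size (Lroot T tau x) - s') %% size (Lroot T tau x))).
Proof.
move=> hx hs; have [f1 f2 f3 f4 f5] := inR_facts hx.
have hsz := size_Sx hx; have hL := size_Lroot hx.
split.
- move=> hQ i hi; rewrite -(@nth_Sx T tau x i); [apply: hQ|]; lia.
- move=> h; apply: Q_period => //; first lia.
  + by rewrite hL; apply: Sx_period.
  + move=> i hi hi'; rewrite nth_Sx //; apply: h => //.
Qed.

Lemma pos_info T tau j : inR T tau j ->
  Lhead T tau j < size (Lroot T tau j) /\ Q (Sx T tau j) (Lroot T tau j) (Lhead T tau j).
Proof.
move=> hj; have [f1 f2 f3 f4 f5] := inR_facts hj.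
have [g1 g2 g3 g4] := run_info hj.
have hsz := size_Sx hj; have hL := size_Lroot hj.
have [t0 ht0 hH] := Lroot_form hj.
have hQ : Q (Sx T tau j) (Lroot T tau j) t0.
  move=> i hi; rewrite nth_Sx // hL hH nth_sub; last by have := ltn_pmod (i + per (W T tau j) - t0) f3; lia.
  move: hi; rewrite /Sx size_sub => hi.
  apply: (pT_mod f3 g3); try lia.
  rewrite modnDmr.
  have -> : j + t0 + (i + per (W T tau j) - t0) = j + i + per (W T tau j) by lia.
  by rewrite modnDr.
have hh : has (Ldecomp_ok (Sx T tau j) (Lroot T tau j)) (iota 0 (size (Lroot T tau j))).
  apply/hasP; exists t0; first by rewrite mem_iota; lia.
  by apply/Ldecomp_Q => //; lia.
have hf : Lhead T tau j < size (Lroot T tau j).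
  by move: hh; rewrite has_find size_iota.
split=> //.
have hd := nth_find 0 hh; rewrite nth_iota // add0n in hd.
change (is_true (Ldecomp_ok (Sx T tau j) (Lroot T tau j) (Lhead T tau j))) in hd.
apply: (proj1 (Ldecomp_Q _ _ _)) hd => //; lia.
Qed.

Lemma Ldecomp_first T tau x s' : inR T tau x -> s' < size (Lroot T tau x) ->
  Ldecomp_ok (Sx T tau x) (Lroot T tau x) s' <->
  (forall i, i < size (Lroot T tau x) -> tch T (x + i) =
      nth 0 (Lroot T tau x) ((i + size (Lroot T tau x) - s') %% size (Lroot T tau x))).
Proof.
move=> hx hs; have hsz := size_Sx hx; have hL := size_Lroot hx.
have [f1 f2 f3 f4 f5] := inR_facts hx.
rewrite Ldecomp_Q; [|lia|lia|lia].
by apply: Q_first => //; apply: ltnW.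
Qed.

Lemma Lhead_transfer T tau j j' : inR T tau j -> inR T tau j' ->
  Lroot T tau j' = Lroot T tau j ->
  (forall i, i < size (Lroot T tau j) -> tch T (j+i) = tch T (j'+i)) ->
  Lhead T tau j' = Lhead T tau j.
Proof.
move=> hj hj' hr he.
rewrite /Lhead /=.
change (sub T j' (endp T tau j')) with (Sx T tau j').
change (sub T j (endp T tau j)) with (Sx T tau j).
rewrite hr; apply: eq_in_find => s'; rewrite mem_iota add0n => /andP [_ hs'].
have e1 := Ldecomp_first hj hs'.
have e2 := Ldecomp_first hj' (s' := s'); rewrite hr in e2; have {}e2 := e2 hs'.
apply/idP/idP.
- move/e2 => h; apply/e1 => i hi; rewrite he //; exact: h.
- move/e1 => h; apply/e2 => i hi; rewrite -he //; exact: h.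
Qed.

Lemma lcp_spec a b i : i < lcp a b -> [/\ i < size a, i < size b & nth 0 a i = nth 0 b i].
Proof.
elim: a b i => [|x a IH] [|y b] i //=.
case: eqP => // -> ; case: i => [|i] //= h.
by have [h1 h2 h3] := IH b i h.
Qed.

Lemma lcp_drop a b k : (forall i, i < k -> [/\ i < size a, i < size b & nth 0 a i = nth 0 b i]) ->
  lcp a b = k + lcp (drop k a) (drop k b).
Proof.
elim: k a b => [|k IH] a b h; first by rewrite !drop0.
case: a h => [|x a] h; first by have [] := h 0 isT.
case: b h => [|y b] h; first by have [] := h 0 isT.
have [_ _ /= ->] := h 0 isT; rewrite /= eqxx IH ?addSn // => i hi.
by have := h i.+1 hi.
Qed.

Lemma lexlt_drop a b k : (forall i, i < k -> [/\ i < size a, i < size b & nth 0 a i = nth 0 b i]) ->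
  lexlt a b = lexlt (drop k a) (drop k b).
Proof.
elim: k a b => [|k IH] a b h; first by rewrite !drop0.
case: a h => [|x a] h; first by have [] := h 0 isT.
case: b h => [|y b] h; first by have [] := h 0 isT.
have [_ _ /= ->] := h 0 isT; rewrite /= eqxx ltnn /= IH // => i hi.
by have := h i.+1 hi.
Qed.

Lemma size_suff T x : 1 <= x -> size (suff T x) = size T + 1 - x.
Proof. by move=> h; rewrite /suff size_drop; lia. Qed.

Lemma nth_suff T x i : 1 <= x -> nth 0 (suff T x) i = tch T (x + i).
Proof. by move=> h; rewrite /suff nth_drop /tch; congr nth; lia. Qed.

Lemma drop_suff T x k : 1 <= x -> drop k (suff T x) = suff T (x + k).
Proof. by move=> h; rewrite /suff drop_drop; congr drop; lia. Qed.

Lemma suff_cons T x : 1 <= x -> x <= size T -> suff T x = tch T x :: suff T x.+1.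
Proof.
move=> h1 h2; rewrite /suff (drop_nth 0); last by lia.
by rewrite /tch; congr (_ :: drop _ _); lia.
Qed.

Lemma suff_nil T x : size T < x -> suff T x = [::].
Proof. by move=> h; rewrite /suff drop_oversize //; lia. Qed.

Lemma LCE_ge T j j' k : 1 <= j -> 1 <= j' ->
  (k <= LCE T j j' <-> forall i, i < k ->
     [/\ j + i <= size T, j' + i <= size T & tch T (j+i) = tch T (j'+i)]).
Proof.
move=> h1 h2; split.
- move=> hk i hi; have [a1 a2 a3] := @lcp_spec (suff T j) (suff T j') i ltac:(rewrite /LCE in hk; lia).
  rewrite !nth_suff // in a3; rewrite !size_suff // in a1 a2; split=> //; lia.
- move=> h; rewrite /LCE (@lcp_drop _ _ k) ?leq_addr // => i hi.
  have [a1 a2 a3] := h i hi; rewrite !size_suff // !nth_suff //; split=> //; lia.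
Qed.

Lemma transfer T tau j j' : inR T tau j -> 1 <= j' ->
  (forall i, i < 3 * tau - 1 -> j' + i <= size T /\ tch T (j+i) = tch T (j'+i)) ->
  [/\ inR T tau j', Lroot T tau j' = Lroot T tau j & Lhead T tau j' = Lhead T tau j].
Proof.
move=> hj h1 h.
have [f1 f2 f3 f4 f5] := inR_facts hj.
have hW : W T tau j' = W T tau j.
  rewrite /W; have -> : j' + 3*tau - 1 = j' + (3*tau - 1) by lia.
  have -> : j + 3*tau - 1 = j + (3*tau - 1) by lia.
  by apply: sub_eq => i hi; have [_ ->] := h i hi.
have hR : inR T tau j'.
  apply/and3P; split=> //.
    by have [] := h (3 * tau - 2) ltac:(lia); lia.
  by change (3 * per (W T tau j') <= tau); rewrite hW.
have hr : Lroot T tau j' = Lroot T tau j.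
  rewrite /Lroot; change (per (sub T j' (j' + 3 * tau - 1))) with (per (W T tau j')).
  change (per (sub T j (j + 3 * tau - 1))) with (per (W T tau j)).
  rewrite hW; congr lexmin; apply/eq_in_map => t; rewrite mem_iota => /andP [_ ht].
  apply: sub_eq => i hi; rewrite -!addnA; have [_ ->] := h (t + i) ltac:(lia); done.
split=> //; apply: Lhead_transfer => // i hi.
by have [_ ->] := h i ltac:(rewrite (size_Lroot hj) in hi; lia).
Qed.

Lemma typE T tau j : inR T tau j -> typ T tau j =
  if (endp T tau j <= size T) && (tch T (endp T tau j - per (W T tau j)) < tch T (endp T tau j))
  then 1%Z else (-1)%Z.
Proof. by move=> hj; rewrite /typ (size_Lroot hj). Qed.

Theorem lemma5p11 (sigma : nat) (T : seq nat) (mu : R) (tau : nat)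
  (Halph : all (fun c => c < sigma) T)
  (Hsigma2 : 2 <= sigma)
  (Hsigman : (INR sigma < Rpower (INR (size T)) (1 / 7))%R)
  (Hmu0 : (0 < mu)%R) (Hmu1 : (mu < 1 / 6)%R)
  (Htau_floor : (INR tau <= mu * (ln (INR (size T)) / ln (INR sigma))
                 < INR tau + 1)%R)
  (Htau1 : 1 <= tau)
  (H : seq nat) (s j : nat)
  (Hj : inRsH T tau s H j) :
  forall j' : nat, 1 <= j' <= size T ->
    (3 * tau - 1 <= LCE T j j' <-> inRsH T tau s H j') /\
    (inRsH T tau s H j' ->
      let t := endp T tau j - j in
      let t' := endp T tau j' - j' in
      minn t t' <= LCE T j j' /\
      (typ T tau j <> typ T tau j' ->
         (lexlt (suff T j) (suff T j') <-> (typ T tau j < typ T tau j')%Z)) /\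
      (typ T tau j = (-1)%Z -> typ T tau j' = (-1)%Z -> t <> t' ->
         (lexlt (suff T j) (suff T j') <-> t < t')) /\
      (typ T tau j = 1%Z -> typ T tau j' = 1%Z -> t <> t' ->
         (lexlt (suff T j) (suff T j') <-> t' < t)) /\
      (typ T tau j <> typ T tau j' \/ t <> t' -> LCE T j j' = minn t t')).
Proof.
move=> j' /andP [hj'1 hj'n].
case: Hj => hRj [hH hs].
have [f1 f2 f3 f4 f5] := inR_facts hRj.
have [g1 g2 g3 g4] := run_info hRj.
have hb : forall x, inRsH T tau s H x -> forall i, i < minn (endp T tau j - j) (endp T tau x - x) ->
    tch T (j + i) = tch T (x + i).
  move=> x [hRx [hHx hsx]] i hi.
  have [_ q1] := pos_info hRj; have [_ q2] := pos_info hRx.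
  have [h1 h2 h3 h4] := run_info hRx.
  rewrite hH hs in q1; rewrite hHx hsx in q2.
  rewrite -(@nth_Sx T tau j i); last by rewrite /Sx size_sub; lia.
  rewrite -(@nth_Sx T tau x i); last by rewrite /Sx size_sub; lia.
  rewrite q1; last by rewrite /Sx size_sub; lia.
  rewrite q2 //; by rewrite /Sx size_sub; lia.
split.
  split.
  - move/(LCE_ge _ _ f1 hj'1) => h.
    have [r1 r2 r3] := @transfer T tau j j' hRj hj'1 (fun i hi => let: And3 a b c := h i hi in conj b c).
    by split=> //; rewrite r2 r3.
  - move=> hR'; apply/(LCE_ge _ _ f1 hj'1) => i hi.
    case: hR' => hR'1 hR'2; have [h1 h2 h3 h4] := run_info hR'1.
    split; try lia; apply: hb => //; lia.
move=> hR'; cbv zeta.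
case: (hR') => hRj' [hHj' hsj'].
have [h1 h2 h3 h4] := run_info hRj'.
have hp : per (W T tau j') = per (W T tau j).
  by rewrite -(size_Lroot hRj) -(size_Lroot hRj') hH hHj'.
rewrite hp in h3 h4.
rewrite (typE hRj) (typE hRj') hp.
set p := per (W T tau j) in f3 f4 f5 g3 g4 h3 h4 *.
set e := endp T tau j in g1 g2 g3 g4 hb *.
set e' := endp T tau j' in h1 h2 h3 h4 *.
have heq := hb j' hR'.
rewrite -/e -/e' in heq.
set k := minn (e - j) (e' - j') in heq *.
have hk : forall i, i < k -> [/\ i < size (suff T j), i < size (suff T j') &
          nth 0 (suff T j) i = nth 0 (suff T j') i].
  move=> i hi; rewrite !size_suff // !nth_suff // heq //; split=> //; lia.
have hLCE : LCE T j j' = k + lcp (suff T (j + k)) (suff T (j' + k)).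
  by rewrite /LCE (lcp_drop hk) !drop_suff.
have hlex : lexlt (suff T j) (suff T j') = lexlt (suff T (j + k)) (suff T (j' + k)).
  by rewrite (lexlt_drop hk) !drop_suff.
rewrite hLCE hlex.
have hkk : k <= k + lcp (suff T (j + k)) (suff T (j' + k)) by apply: leq_addr.
split; first exact: hkk.
clear hkk hLCE hlex hk hb.
case: (ltngtP (e - j) (e' - j')) => ht.
-
  have ek : k = e - j by rewrite /k; lia.
  rewrite ek; have -> : j + (e - j) = e by lia.
  have hY : tch T (j' + (e - j)) = tch T (e - p).
    have -> : e - p = j + (e - j - p) by lia.
    rewrite heq; last by lia.
    rewrite (h3 (j' + (e - j - p))); try lia. congr tch; lia.
  rewrite (@suff_cons T (j' + (e - j))); try lia.
  rewrite hY.
  case: (leqP e (size T)) => he.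
  + rewrite (@suff_cons T e) //=; last by lia.
    have hne := g4 he.
    case: (ltngtP (tch T e) (tch T (e - p))) => hc //=; rewrite ?he /=.
    * case: ((e' <= size T) && (tch T (e' - p) < tch T e')); repeat split; move=> *; lia.
    * case: ((e' <= size T) && (tch T (e' - p) < tch T e')); repeat split; move=> *; lia.
  + rewrite (@suff_nil T e) /=; last by lia.
    rewrite /=.
    case: ((e' <= size T) && (tch T (e' - p) < tch T e')); repeat split; move=> *; lia.
-
  have ek : k = e' - j' by rewrite /k; lia.
  rewrite ek; have -> : j' + (e' - j') = e' by lia.
  have hY : tch T (j + (e' - j')) = tch T (e' - p).
    have -> : e' - p = j' + (e' - j' - p) by lia.
    rewrite -heq; last by lia.
    rewrite (g3 (j + (e' - j' - p))); try lia. congr tch; lia.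
  rewrite (@suff_cons T (j + (e' - j'))); try lia.
  rewrite hY.
  case: (leqP e' (size T)) => he.
  + rewrite (@suff_cons T e') //=; last by lia.
    have hne := h4 he.
    case: (ltngtP (tch T e') (tch T (e' - p))) => hc //=; rewrite ?he /=.
    * case: ((e <= size T) && (tch T (e - p) < tch T e)); repeat split; move=> *; lia.
    * case: ((e <= size T) && (tch T (e - p) < tch T e)); repeat split; move=> *; lia.
  + rewrite (@suff_nil T e') /=; last by lia.
    case: ((e <= size T) && (tch T (e - p) < tch T e)); repeat split; move=> *; lia.
-
  have ek : k = e - j by rewrite /k; lia.
  rewrite ek; have -> : j + (e - j) = e by lia.
  have -> : j' + (e - j) = e' by lia.
  have hY : tch T (e' - p) = tch T (e - p).
    have -> : e - p = j + (e - j - p) by lia.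
    rewrite heq; last by lia.
    congr tch; lia.
  rewrite hY.
  case: (leqP e (size T)) => he; case: (leqP e' (size T)) => he'.
  + rewrite (@suff_cons T e); try lia. rewrite (@suff_cons T e') /=; try lia.
    have hne := g4 he; have hne' := h4 he'; rewrite hY in hne'.
    case: (ltngtP (tch T e) (tch T (e - p))) => hc //=;
    case: (ltngtP (tch T e') (tch T (e - p))) => hc' //=;
    case: (ltngtP (tch T e) (tch T e')) => hc'' //=; repeat split; move=> *; lia.
  + rewrite (@suff_cons T e); try lia. rewrite (@suff_nil T e') /=; try lia.
    have hne := g4 he.
    case: (ltngtP (tch T e) (tch T (e - p))) => hc //=; repeat split; move=> *; lia.
  + rewrite (@suff_nil T e); try lia. rewrite (@suff_cons T e') /=; try lia.
    have hne' := h4 he'; rewrite hY in hne'.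
    case: (ltngtP (tch T e') (tch T (e - p))) => hc //=; repeat split; move=> *; lia.
  + rewrite (@suff_nil T e); try lia. rewrite (@suff_nil T e') /=; try lia.
    all: try (repeat split; move=> *; lia).
Qed.
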